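(* Let $h:[p]\to[m]$ be a random map with $h(j)=h_j\overset{iid}{\sim}\mathrm{Unif}([m])$ for each $j\in[p]$. For $k\in[m]$ let $h^{-1}(k)=\{j\in[p]:h(j)=k\}$ be the (random) preimage set. Let $\mathcal{A}\subset[p]$ with $a=|\mathcal{A}|>1$, and let $j\in[p]$. Then $$\mathbb{E}\Big[\frac{|\mathcal{A}\cap h^{-1}(h_j)\setminus\{j\}|}{|h^{-1}(h_j)|}\Big]=\frac{a-\mathbf{I}\{j\in\mathcal{A}\}}{p-1}\cdot\Big(1-\frac{m}{p}\Big(1-\Big(\frac{m-1}{m}\Big)^p\Big)\Big),$$ and $$\mathbb{E}\Big[\frac{|\mathcal{A}\cap h^{-1}(h_j)\setminus\{j\}|}{|h^{-1}(h_j)|^2}\Big]=m\,\frac{a-\mathbf{I}\{j\in\mathcal{A}\}}{p-1}\cdot\Big(\frac{1}{p-1}-\frac{m+1}{(p-1)^2}+\mathcal{O}(p^{-3})\Big).$$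
   Context: $[k]$ denotes $\{1,\dots,k\}$. $\mathbf{I}\{\cdot\}$ is the indicator function. *)

(* Defs.v *)
From HB Require Import structures.
From mathcomp Require Import all_boot all_order all_algebra.
Set Implicit Arguments. Unset Strict Implicit. Unset Printing Implicit Defensive.
Import Order.TTheory GRing.Theory Num.Theory.
Local Open Scope ring_scope.

(* [p] is modelled by 'I_p, [m] by 'I_m (0-based indexing). *)

Definition preim_set (p m : nat) (h : {ffun 'I_p -> 'I_m}) (k : 'I_m)
  : {set 'I_p} := [set i | h i == k].

(* Expectation under h uniformly distributed on all maps [p] -> [m]
   (equivalently h_j iid Unif([m])). *)
Definition Eunif (R : realFieldType) (p m : nat)
  (X : {ffun 'I_p -> 'I_m} -> R) : R :=
  (\sum_(h : {ffun 'I_p -> 'I_m}) X h) / (#|{ffun 'I_p -> 'I_m}|)%:R.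

Definition bucket_ratio (R : realFieldType) (p m : nat) (e : nat) (A : {set 'I_p})
  (j : 'I_p) (h : {ffun 'I_p -> 'I_m}) : R :=
  (#|(A :&: preim_set h (h j)) :\ j|)%:R / ((#|preim_set h (h j)|)%:R ^+ e).

Definition indic (b : bool) : nat := if b then 1%N else 0%N.

(* Main.v *)
Require Import Defs.
From HB Require Import structures.
From mathcomp Require Import all_boot all_order all_algebra.
Set Implicit Arguments. Unset Strict Implicit. Unset Printing Implicit Defensive.
Import Order.TTheory GRing.Theory Num.Theory.
Local Open Scope ring_scope.
From mathcomp Require Import ring lra.

Lemma foldr_prod (T: finType) (f : T -> nat) : foldr muln 1 [seq f x | x : T] = \prod_x f x.
Proof. by rewrite foldrE big_image. Qed.

Lemma card_preim_fam (p m : nat) (v : 'I_m) (S : {set 'I_p}) :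
  #|[pred h : {ffun 'I_p -> 'I_m} | preim_set h v == S]| = (m.-1 ^ (p - #|S|))%N.
Proof.
pose F := fun i : 'I_p => if i \in S then pred1 v else predC1 v.
have -> : #|[pred h : {ffun 'I_p -> 'I_m} | preim_set h v == S]| = #|family F|.
  apply: eq_card => h; rewrite !inE; apply/eqP/familyP.
    move=> HS i; rewrite /F -HS /preim_set inE.
    by case: (h i =P v) => [->|/eqP H]; rewrite inE ?eqxx.
  move=> Hf; apply/setP => i; rewrite /preim_set inE; have := Hf i; rewrite /F.
  by case: (i \in S); rewrite !inE => /eqP //; case: eqP.
rewrite card_family.
rewrite foldrE big_image /=.
rewrite (bigID (fun x => x \in S)) /=.
rewrite big1 ?mul1n; last by move=> i iS; rewrite /F iS card1.
rewrite (eq_bigr (fun _ => m.-1)); last first.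
  by move=> i iS; rewrite /F (negbTE iS) cardC1 card_ord.
rewrite prod_nat_const.
congr (_ ^ _)%N.
have -> : #|(fun i : 'I_p => i \notin S)| = #|~: S| by apply: eq_card => i; rewrite inE.
by have := cardsCs (~: S); rewrite setCK card_ord => ->.
Qed.

Lemma sum_bucket (R : realFieldType) (p m : nat) (j : 'I_p) (G : nat -> R) :
  \sum_(h : {ffun 'I_p -> 'I_m}) G #|preim_set h (h j)|
  = m%:R * \sum_(k < p) ('C(p.-1, k) * m.-1 ^ (p.-1 - k))%:R * G k.+1.
Proof.
move: j G; case: p => [[]//|p] j G /=.
pose f := fun n => (m.-1 ^ (p.+1 - n))%:R * G n : R.
transitivity (\sum_(v : 'I_m) \sum_(S : {set 'I_p.+1} | j \in S) f #|S|).
  rewrite (partition_big (fun h : {ffun 'I_p.+1 -> 'I_m} => h j) predT) //=.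
  apply: eq_bigr => v _.
  rewrite (eq_bigr (fun h => G #|preim_set h v|)); last by move=> h /eqP ->.
  rewrite (partition_big (fun h => preim_set h v) (fun S => j \in S)); last first.
    by move=> h /eqP hj; rewrite /preim_set inE hj.
  apply: eq_bigr => S jS.
  rewrite (eq_bigr (fun _ => G #|S|)); last by move=> h /andP [_ /eqP ->].
  rewrite sumr_const /f [RHS]mulrC mulr_natr; congr (_ *+ _).
  rewrite -(card_preim_fam v); apply: eq_card => h; rewrite !inE.
  apply/andP/idP => [[]//| /eqP HS]; split; last by rewrite HS.
  by move: jS; rewrite -HS /preim_set inE.
rewrite sumr_const card_ord [RHS]mulrC mulr_natr; congr (_ *+ _).
rewrite (reindex_onto (fun S => j |: S) (fun S => S :\ j)) /=; last first.
  by move=> S jS; rewrite setD1K.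
rewrite (eq_bigl (fun S : {set 'I_p.+1} => j \notin S)); last first.
  move=> S; rewrite setU11 /=; case jS: (j \in S) => /=.
    by apply/eqP => E; move: jS; rewrite -E !inE eqxx.
  by rewrite setU1K ?eqxx // jS.
have sub1 : forall S : {set 'I_p.+1}, j \notin S -> S \subset [set~ j].
  move=> S jS; apply/subsetP => x xS; rewrite !inE.
  by apply: contraNneq jS => <-.
have bnd : forall S : {set 'I_p.+1}, j \notin S -> (#|S| < p.+1)%N.
  move=> S jS; rewrite ltnS.
  apply: (@leq_trans #|[set~ j]|); last by rewrite cardsC1 card_ord.
  by rewrite subset_leq_card // sub1.
rewrite (partition_big (fun S : {set 'I_p.+1} => (inord #|S| : 'I_p.+1)) predT) //=.
apply: eq_bigr => k _.
rewrite (eq_bigr (fun _ => f k.+1)); last first.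
  by move=> S /andP [jS /eqP <-]; rewrite cardsU1 jS inordK ?bnd.
rewrite sumr_const /f -[_ *+ #|_|]mulr_natr mulrAC -natrM mulnC subSS; congr ((_ * _)%:R * _).
transitivity 'C(#|[set~ j]|, k); last by rewrite cardsC1 card_ord.
rewrite -cards_draws; apply: eq_card => S; rewrite !inE.
apply/andP/andP => [[jS /eqP <-]|[sS /eqP Sk]].
  by split; [rewrite sub1 | rewrite inordK ?bnd].
have jS : j \notin S.
  by apply: contraL sS => jS; apply/subsetPn; exists j => //; rewrite !inE eqxx.
split => //; apply/eqP/val_inj; by rewrite /= Sk inordK.
Qed.

Definition swp (p : nat) (a b : 'I_p) (x : 'I_p) : 'I_p :=
  if x == a then b else if x == b then a else x.

Lemma swpK p (a b : 'I_p) : involutive (swp a b).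
Proof.
move=> x; rewrite /swp.
have [->|xa] := eqVneq x a.
  rewrite eqxx; have [->|ba] := eqVneq b a; first by [].
  done.
have [->|xb] := eqVneq x b; first by rewrite eqxx.
by rewrite !(negbTE xa) !(negbTE xb).
Qed.

Lemma card_sum_ind (R : realFieldType) p m (X : {set 'I_p}) (j : 'I_p)
   (h : {ffun 'I_p -> 'I_m}) :
  (#|(X :&: preim_set h (h j)) :\ j|%:R : R)
  = \sum_(i | (i \in X) && (i != j)) ((h i == h j)%:R : R).
Proof.
rewrite -sumr_const big_mkcond [RHS]big_mkcond /=; apply: eq_bigr => i _.
rewrite /preim_set !inE; case: (i \in X); case: (i != j); case: (h i == h j) => //=.
Qed.

Lemma sum_ratio (R : realFieldType) p m e (A : {set 'I_p}) (j i0 : 'I_p) :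
  i0 != j ->
  \sum_(h : {ffun 'I_p -> 'I_m}) bucket_ratio R e A j h
  = (#|A| - indic (j \in A))%N%:R / (p.-1)%:R *
    \sum_(h : {ffun 'I_p -> 'I_m})
        ((#|preim_set h (h j)|.-1)%:R / (#|preim_set h (h j)|%:R ^+ e)).
Proof.
move=> i0j.
pose T i := \sum_(h : {ffun 'I_p -> 'I_m})
   ((h i == h j)%:R / (#|preim_set h (h j)|%:R ^+ e) : R).
have Teq : forall i, i != j -> T i = T i0.
  move=> i ij; rewrite /T.
  pose sg := fun h : {ffun 'I_p -> 'I_m} => [ffun x => h (swp i i0 x)].
  have sgK : involutive sg by move=> h; apply/ffunP => x; rewrite !ffunE swpK.
  rewrite (reindex_inj (inv_inj sgK)) /=; apply: eq_bigr => h _.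
  have sj : swp i i0 j = j by rewrite /swp eq_sym (negbTE ij) eq_sym (negbTE i0j).
  rewrite /sg !ffunE sj {1}/swp eqxx; congr (_ / _ ^+ _); congr (_%:R).
  have -> : preim_set [ffun x => h (swp i i0 x)] (h j) = swp i i0 @^-1: preim_set h (h j).
    by apply/setP => x; rewrite /preim_set !inE ffunE.
  by rewrite card_preimset //; apply: inv_inj; apply: swpK.
have key : forall X : {set 'I_p}, \sum_(h : {ffun 'I_p -> 'I_m})
     (#|(X :&: preim_set h (h j)) :\ j|%:R / (#|preim_set h (h j)|%:R ^+ e))
   = #|[set i | (i \in X) && (i != j)]|%:R * T i0.
  move=> X.
  under eq_bigr => h _ do rewrite card_sum_ind mulr_suml.
  rewrite exchange_big /=.
  rewrite (eq_bigr (fun _ => T i0)); last by move=> i /andP [_ ij]; exact: (Teq i ij).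
  by rewrite sumr_const mulr_natl; congr (_ *+ _); apply: eq_card => i; rewrite inE.
have p1 : (0 < p.-1)%N.
  have : (1 < #|'I_p|)%N by apply/card_gt1P; exists i0, j.
  by rewrite card_ord -subn1 subn_gt0.
rewrite /bucket_ratio key.
have -> : \sum_(h : {ffun 'I_p -> 'I_m})
        ((#|preim_set h (h j)|.-1)%:R / (#|preim_set h (h j)|%:R ^+ e) : R)
   = \sum_(h : {ffun 'I_p -> 'I_m})
     (#|([set: 'I_p] :&: preim_set h (h j)) :\ j|%:R / (#|preim_set h (h j)|%:R ^+ e)).
  apply: eq_bigr => h _; rewrite setTI (cardsD1 j) /preim_set inE eqxx.
  by rewrite add1n.
rewrite key mulrA; congr (_ * _).
have -> : #|[set i | (i \in [set: 'I_p]) && (i != j)]| = p.-1.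
  have := cardC1 j; rewrite card_ord => <-; apply: eq_card => i; rewrite !inE.
  done.
rewrite divfK ?pnatr_eq0 -?lt0n //.
congr (_%:R); rewrite (cardsD1 j A) /indic; case: (j \in A) => /=.
  rewrite add1n subn1 /=; apply: eq_card => i; rewrite !inE; by rewrite andbC.
by rewrite add0n subn0; apply: eq_card => i; rewrite !inE andbC.
Qed.
Section C.
Variable R : realFieldType.

Lemma binsum_tail r n (x : R) :
  \sum_(k < n.+1) 'C(n + r, k + r)%:R * x ^+ (n - k)
  = (x + 1) ^+ (n + r) - \sum_(i < r) 'C(n + r, i)%:R * x ^+ (n + r - i).
Proof.
rewrite exprDn -(big_mkord xpredT (fun i => x ^+ (n + r - i) * 1 ^+ i *+ 'C(n + r, i))) (@big_cat_nat _ _ _ r) //=; last exact: leqW (leq_addl _ _).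
rewrite (big_addn 0 _ r) big_mkord addrAC.
have -> : ((n + r).+1 - r = n.+1)%N by rewrite -addSn addnK.
rewrite big_mkord.
rewrite [X in X - _](eq_bigr (fun i : 'I_r => 'C(n + r, i)%:R * x ^+ (n + r - i))); last first.
  by move=> i _; rewrite expr1n mulr1 mulr_natl.
rewrite subrr add0r; apply: eq_bigr => k _.
by rewrite expr1n mulr1 subnDr mulr_natl.
Qed.

Lemma binsum_tail_le r n (x : R) : 0 <= x ->
  \sum_(k < n.+1) 'C(n + r, k + r)%:R * x ^+ (n - k) <= (x + 1) ^+ (n + r).
Proof.
move=> x0; rewrite binsum_tail lerBlDr lerDl.
by apply: sumr_ge0 => i _; rewrite mulr_ge0 ?exprn_ge0.
Qed.

Lemma bin_div1 n k : ('C(n, k)%:R / (k.+1)%:R : R) = 'C(n.+1, k.+1)%:R / (n.+1)%:R.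
Proof.
have := mul_bin_diag n.+1 k => /= /(congr1 (fun t => t%:R : R)).
rewrite !natrM => E.
apply/eqP; rewrite eqr_div ?pnatr_eq0 // [X in X == _]mulrC E mulrC //.
Qed.


Lemma bin_div2 n k : ('C(n, k)%:R / ((k.+1)%:R * (k.+2)%:R) : R)
  = 'C(n.+2, k.+2)%:R / ((n.+1)%:R * (n.+2)%:R).
Proof.
by rewrite !invfM !mulrA bin_div1 mulrAC bin_div1 mulrAC.
Qed.

Lemma bin_div3 n k : ('C(n, k)%:R / ((k.+1)%:R * (k.+2)%:R * (k.+3)%:R) : R)
  = 'C(n.+3, k.+3)%:R / ((n.+1)%:R * (n.+2)%:R * (n.+3)%:R).
Proof.
rewrite invfM mulrA bin_div2 mulrAC bin_div1 -!mulrA; congr (_ * _); rewrite -!invfM; congr (_^-1); ring.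
Qed.

Lemma S0 n (x : R) : \sum_(k < n.+1) 'C(n, k)%:R * x ^+ (n - k) = (x + 1) ^+ n.
Proof.
rewrite exprDn; apply: eq_bigr => k _; by rewrite expr1n mulr1 mulr_natl.
Qed.

Lemma S1 n (x : R) : \sum_(k < n.+1) 'C(n, k)%:R * x ^+ (n - k) / (k.+1)%:R
  = ((x + 1) ^+ n.+1 - x ^+ n.+1) / (n.+1)%:R.
Proof.
transitivity ((\sum_(k < n.+1) 'C(n + 1, k + 1)%:R * x ^+ (n - k)) / (n.+1)%:R).
  rewrite mulr_suml; apply: eq_bigr => k _.
  by rewrite mulrAC bin_div1 mulrAC !addn1.
rewrite binsum_tail big_ord_recl big_ord0 addr0 bin0 subn0 mul1r.
by rewrite !addn1.
Qed.

Lemma S2 n (x : R) :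
  \sum_(k < n.+1) 'C(n, k)%:R * x ^+ (n - k) / ((k.+1)%:R * (k.+2)%:R)
  = ((x + 1) ^+ n.+2 - x ^+ n.+2 - (n.+2)%:R * x ^+ n.+1) / ((n.+1)%:R * (n.+2)%:R).
Proof.
transitivity ((\sum_(k < n.+1) 'C(n + 2, k + 2)%:R * x ^+ (n - k)) / ((n.+1)%:R * (n.+2)%:R)).
  rewrite mulr_suml; apply: eq_bigr => k _.
  by rewrite mulrAC bin_div2 mulrAC !addn2.
rewrite binsum_tail !big_ord_recl big_ord0 addr0 bin0 subn0 mul1r /=.
rewrite !addn2 /bump /= add1n bin1 subn1 /=.
by rewrite opprD addrA.
Qed.

Lemma S3 n (x : R) : 0 <= x ->
  \sum_(k < n.+1) 'C(n, k)%:R * x ^+ (n - k) / ((k.+1)%:R * (k.+2)%:R * (k.+3)%:R)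
  <= (x + 1) ^+ n.+3 / ((n.+1)%:R * (n.+2)%:R * (n.+3)%:R).
Proof.
move=> x0.
have -> : \sum_(k < n.+1) 'C(n, k)%:R * x ^+ (n - k) / ((k.+1)%:R * (k.+2)%:R * (k.+3)%:R)
  = (\sum_(k < n.+1) 'C(n + 3, k + 3)%:R * x ^+ (n - k)) / ((n.+1)%:R * (n.+2)%:R * (n.+3)%:R).
  rewrite mulr_suml; apply: eq_bigr => k _.
  by rewrite mulrAC bin_div3 mulrAC !addn3.
rewrite ler_pM2r ?invr_gt0 ?mulr_gt0 ?ltr0Sn //.
by have := binsum_tail_le 3 n x0; rewrite addn3.
Qed.

Lemma bern (x : R) (n : nat) : 0 <= x -> n%:R * x ^+ n <= x * (x + 1) ^+ n.
Proof.
move=> x0; elim: n => [|n IH]; first by rewrite mul0r mulr_ge0 // exprn_ge0 // addr_ge0.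
have h1 : x ^+ n <= (x + 1) ^+ n by rewrite lerXn2r ?nnegrE ?addr_ge0 //; lra.
rewrite -natr1 mulrDl mul1r !exprS.
have -> : x * ((x + 1) * (x + 1) ^+ n) = x * (x * (x + 1) ^+ n) + x * (x + 1) ^+ n by ring.
have h2 : n%:R * (x * x ^+ n) <= x * (x * (x + 1) ^+ n).
  by rewrite mulrCA ler_wpM2l.
have h3 : x * x ^+ n <= x * (x + 1) ^+ n by rewrite ler_wpM2l.
lra.
Qed.
End C.
Lemma fin_bound (R : realFieldType) (M X N s Z : R) :
  1 <= N -> 0 <= X -> M = X + 1 -> 0 <= Z -> (N + 1) * Z <= X ->
  let u := 1 / (N + 1) - M / ((N + 1) * (N + 2)) + X * Z / ((N + 1) * (N + 2)) in
  u - 3 * M ^+ 2 / ((N + 1) * (N + 2) * (N + 3)) <= s -> s <= u ->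
  `|s - 1 / N + (M + 1) / N ^+ 2| <= (8 * (1 + 3 * M) + X ^+ 2 + 3 * M ^+ 2) / (N + 1) ^+ 3.
Proof.
move=> N1 X0 eM Z0 ZX u lo hi.
have N0 : 0 < N by lra.
have Nn : N != 0 by rewrite gt_eqF.
have N1n : N + 1 != 0 by rewrite gt_eqF //; lra.
have N2n : N + 2 != 0 by rewrite gt_eqF //; lra.
have N3n : N + 3 != 0 by rewrite gt_eqF //; lra.
have P0 : 0 < (N + 1) ^+ 3 by rewrite exprn_gt0 //; lra.
pose D := 1 / (N + 1) - M / ((N + 1) * (N + 2)) - 1 / N + (M + 1) / N ^+ 2.
pose Y := X * Z / ((N + 1) * (N + 2)).
pose V := 3 * M ^+ 2 / ((N + 1) * (N + 2) * (N + 3)).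
have E : s - 1 / N + (M + 1) / N ^+ 2 = D + Y + (s - u).
  by rewrite /D /Y /u; field; rewrite ?Nn ?N1n ?N2n.
have eD : D = ((N + 2) + M * (3 * N + 2)) / (N ^+ 2 * (N + 1) * (N + 2)).
  by rewrite /D; field; rewrite ?Nn ?N1n ?N2n.
have M1 : 1 <= M by lra.
have D0 : 0 <= D.
  rewrite eD divr_ge0 // ?mulr_ge0 ?exprn_ge0 //; nra.
have D1 : D <= 8 * (1 + 3 * M) / (N + 1) ^+ 3.
  rewrite eD ler_pdivrMr; last by rewrite !mulr_gt0 ?exprn_gt0 //; lra.
  rewrite mulrAC ler_pdivlMr //.
  have h1 : N + 2 + M * (3 * N + 2) <= (1 + 3 * M) * (N + 2) by nra.
  have h2 : (N + 1) ^+ 3 <= 4 * N ^+ 2 * (N + 1).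
    rewrite exprSr ler_wpM2r //; first lra. rewrite expr2; nra.
  apply: le_trans (ler_pM _ _ h1 h2) _; first nra.
    by rewrite exprn_ge0 //; lra.
  have : 0 <= (1 + 3 * M) * N ^+ 2 * (N + 1) * (N + 2).
    by rewrite !mulr_ge0 ?exprn_ge0 //; lra.
  move=> H. rewrite !expr2 in H *. nra.
have Y0 : 0 <= Y by rewrite /Y divr_ge0 ?mulr_ge0 //; nra.
have Y1 : Y <= X ^+ 2 / (N + 1) ^+ 3.
  rewrite /Y ler_pdivrMr; last by rewrite !mulr_gt0 //; lra.
  rewrite mulrAC ler_pdivlMr //.
  have h : X * ((N + 1) * Z) <= X * X by rewrite ler_wpM2l.
  have h2 : 0 <= X * X * (N + 1) by rewrite !mulr_ge0 //; lra.
  rewrite !exprS expr0 !mulr1; nra.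
have V1 : V <= 3 * M ^+ 2 / (N + 1) ^+ 3.
  rewrite /V ler_pdivrMr; last by rewrite !mulr_gt0 //; lra.
  rewrite mulrAC ler_pdivlMr //.
  have h : 0 <= 3 * M ^+ 2 by rewrite mulr_ge0 // sqr_ge0.
  rewrite !exprS expr0 !mulr1 in h *; nra.
have lo' : - V <= s - u by rewrite /V; lra.
have hi' : s - u <= 0 by lra.
rewrite E ler_norml; apply/andP; split.
  have : 0 <= (8 * (1 + 3 * M) + X ^+ 2 + 3 * M ^+ 2) / (N + 1) ^+ 3.
    by rewrite divr_ge0 ?ltW //; nra.
  rewrite !mulrDl in V1 Y1 D1 *; lra.
rewrite !mulrDl in V1 Y1 D1 *.
have : 0 <= X ^+ 2 / (N + 1) ^+ 3 by apply: divr_ge0; [exact: sqr_ge0 | exact: ltW].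
have : 0 <= 3 * M ^+ 2 / (N + 1) ^+ 3 by rewrite divr_ge0 ?ltW //; nra.
lra.
Qed.
Lemma natS_eq (R : realFieldType) k :
  [/\ (k.+1)%:R = k%:R + 1 :> R, (k.+2)%:R = k%:R + 2 :> R & (k.+3)%:R = k%:R + 3 :> R].
Proof. split; [by rewrite -natr1 | by rewrite -addn2 natrD | by rewrite -addn3 natrD]. Qed.
Lemma pw_up (R : realFieldType) (k : nat) :
  (k%:R / (k.+1)%:R ^+ 2 : R) <= 1 / (k.+1)%:R - 1 / ((k.+1)%:R * (k.+2)%:R).
Proof.
have K0 : (0 : R) <= k%:R by rewrite ler0n.
have h1 : (k.+1)%:R != 0 :> R by rewrite pnatr_eq0.
have h2 : (k.+2)%:R != 0 :> R by rewrite pnatr_eq0.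
have [e1 e2 _] := natS_eq R k.
rewrite e1 e2 in h1 h2 *.
rewrite -subr_ge0.
have -> : 1 / (k%:R + 1) - 1 / ((k%:R + 1) * (k%:R + 2)) - k%:R / (k%:R + 1) ^+ 2
   = 1 / ((k%:R + 1) ^+ 2 * (k%:R + 2)) :> R.
  by field; rewrite h1 h2.
by rewrite divr_ge0 // mulr_ge0 ?exprn_ge0 //; lra.
Qed.

Lemma pw_lo (R : realFieldType) (k : nat) :
  1 / (k.+1)%:R - 1 / ((k.+1)%:R * (k.+2)%:R) - 3 / ((k.+1)%:R * (k.+2)%:R * (k.+3)%:R)
  <= (k%:R / (k.+1)%:R ^+ 2 : R).
Proof.
have K0 : (0 : R) <= k%:R by rewrite ler0n.
have h1 : (k.+1)%:R != 0 :> R by rewrite pnatr_eq0.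
have h2 : (k.+2)%:R != 0 :> R by rewrite pnatr_eq0.
have h3 : (k.+3)%:R != 0 :> R by rewrite pnatr_eq0.
have [e1 e2 e3] := natS_eq R k.
rewrite e1 e2 e3 in h1 h2 h3 *.
rewrite -subr_ge0.
have -> : k%:R / (k%:R + 1) ^+ 2 - (1 / (k%:R + 1) - 1 / ((k%:R + 1) * (k%:R + 2))
      - 3 / ((k%:R + 1) * (k%:R + 2) * (k%:R + 3)))
   = 2 * k%:R / ((k%:R + 1) ^+ 2 * (k%:R + 2) * (k%:R + 3)) :> R.
  by field; rewrite h1 h2 h3.
by rewrite divr_ge0 // ?mulr_ge0 ?exprn_ge0 //; lra.
Qed.

Lemma Eform (R : realFieldType) n m e (A : {set 'I_n.+1}) (j i0 : 'I_n.+1) : i0 != j ->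
  Eunif (fun h : {ffun 'I_n.+1 -> 'I_m} => bucket_ratio R e A j h)
  = (#|A| - indic (j \in A))%N%:R / n%:R *
    (m%:R * \sum_(k < n.+1) 'C(n, k)%:R * (m.-1)%:R ^+ (n - k) * (k%:R / (k.+1)%:R ^+ e))
    / m%:R ^+ n.+1.
Proof.
move=> i0j; rewrite /Eunif (sum_ratio _ _ _ _ i0j).
have := sum_bucket m j (fun c : nat => ((c.-1)%:R / c%:R ^+ e : R)); rewrite /= => ->.
rewrite card_ffun !card_ord natrX; congr (_ * (_ * _) / _).
by apply: eq_bigr => k _; rewrite natrM natrX.
Qed.

Lemma get_i0 n (A : {set 'I_n.+1}) (j : 'I_n.+1) : (1 < #|A|)%N ->
  exists i0 : 'I_n.+1, i0 != j.
Proof.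
case/card_gt1P => x [y [_ _ xy]].
case: (eqVneq x j) => [xj|xj]; last by exists x.
by exists y; rewrite -xj eq_sym.
Qed.

Lemma n_ge1 n (j i0 : 'I_n.+1) : i0 != j -> (1 <= n)%N.
Proof.
case: n j i0 => [|n] j i0 //; by rewrite !ord1 eqxx.
Qed.

Lemma part1 (R : realFieldType) (p m : nat) (A : {set 'I_p}) (j : 'I_p) :
     (0 < m)%N -> (1 < #|A|)%N ->
     Eunif (fun h : {ffun 'I_p -> 'I_m} => bucket_ratio R 1 A j h)
     = ((#|A| - indic (j \in A))%N%:R / (p.-1)%:R)
       * (1 - (m%:R / p%:R) * (1 - ((m.-1)%:R / m%:R) ^+ p)).
Proof.
case: p A j => [|n] A j m0 A1; first by case: j.
have [i0 i0j] := get_i0 j A1.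
have n1 := n_ge1 i0j.
rewrite (Eform _ _ _ _ i0j) /=.
set X := (m.-1)%:R : R.
have XM : X + 1 = m%:R by rewrite /X natr1 prednK.
have ES : \sum_(k < n.+1) 'C(n, k)%:R * X ^+ (n - k) * (k%:R / (k.+1)%:R ^+ 1)
   = (X + 1) ^+ n - ((X + 1) ^+ n.+1 - X ^+ n.+1) / (n.+1)%:R.
  rewrite -S0 -S1 -sumrB; apply: eq_bigr => k _.
  have hk : (k.+1)%:R != 0 :> R by rewrite pnatr_eq0.
  by rewrite expr1; rewrite -natr1 in hk *; field.
rewrite ES XM expr_div_n -XM.
have hM : X + 1 != 0 by rewrite XM pnatr_eq0 -lt0n.
have hn : (n.+1)%:R != 0 :> R by rewrite pnatr_eq0.
have hn' : n%:R != 0 :> R by rewrite pnatr_eq0 -lt0n.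
rewrite !exprS.
by field; rewrite expf_neq0 // -/X hM addrC natr1 hn hn'.
Qed.

Lemma part2_core (R : realFieldType) n m : (0 < m)%N -> (1 <= n)%N ->
  `|(\sum_(k < n.+1) 'C(n, k)%:R * (m.-1)%:R ^+ (n - k) * (k%:R / (k.+1)%:R ^+ 2)) / m%:R ^+ n.+1
     - 1 / n%:R + (m%:R + 1) / n%:R ^+ 2|
  <= (8 * (1 + 3 * m%:R) + (m.-1)%:R ^+ 2 + 3 * m%:R ^+ 2) / (n.+1)%:R ^+ 3 :> R.
Proof.
move=> m0 n1.
set X := (m.-1)%:R : R.
set M := m%:R : R.
have XM : M = X + 1 by rewrite /X natr1 prednK.
have X0 : 0 <= X by rewrite ler0n.
have M0 : 0 < M by rewrite /M ltr0n.
set Sg := \sum_(k < n.+1) _.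
have w0 : forall k : 'I_n.+1, 0 <= 'C(n, k)%:R * X ^+ (n - k).
  by move=> k; rewrite mulr_ge0 ?exprn_ge0 ?ler0n.
have hi : Sg <= \sum_(k < n.+1) 'C(n, k)%:R * X ^+ (n - k) / (k.+1)%:R
              - \sum_(k < n.+1) 'C(n, k)%:R * X ^+ (n - k) / ((k.+1)%:R * (k.+2)%:R).
  rewrite -sumrB; apply: ler_sum => k _.
  have := pw_up R k; rewrite !mul1r => H.
  by rewrite -mulrBr; apply: ler_wpM2l; [exact: w0 | exact: H].
have lo : \sum_(k < n.+1) 'C(n, k)%:R * X ^+ (n - k) / (k.+1)%:R
              - \sum_(k < n.+1) 'C(n, k)%:R * X ^+ (n - k) / ((k.+1)%:R * (k.+2)%:R)
          - 3 * \sum_(k < n.+1) 'C(n, k)%:R * X ^+ (n - k) / ((k.+1)%:R * (k.+2)%:R * (k.+3)%:R)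
          <= Sg.
  rewrite mulr_sumr -!sumrB; apply: ler_sum => k _.
  have := pw_lo R k; rewrite !mul1r => H.
  by rewrite mulrCA -!mulrBr; apply: ler_wpM2l; [exact: w0 | exact: H].
rewrite S1 S2 -XM in hi lo.
have lo3 := S3 n X0; rewrite -XM in lo3.
set Mp := M ^+ n.+1.
have Mp0 : 0 < Mp by rewrite exprn_gt0.
have [e1 e2 e3] := natS_eq R n.
rewrite e1 e2 e3 in hi lo lo3 *.
set N := n%:R.
have N1 : 1 <= N by rewrite /N ler1n.
pose Z := X ^+ n.+1 / Mp.
have Z0 : 0 <= Z by rewrite divr_ge0 ?exprn_ge0 // ltW.
have ZX : (N + 1) * Z <= X.
  rewrite /Z mulrA ler_pdivrMr //.
  have := bern n.+1 X0; rewrite -XM e1 //.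
have hM : M != 0 by rewrite gt_eqF.
have hMn : M ^+ n != 0 by rewrite expf_neq0.
have hN1 : N + 1 != 0 by rewrite gt_eqF //; lra.
have hN2 : N + 2 != 0 by rewrite gt_eqF //; lra.
have hN3 : N + 3 != 0 by rewrite gt_eqF //; lra.
have eu : ((M ^+ n.+1 - X ^+ n.+1) / (N + 1) -
    (M ^+ n.+2 - X ^+ n.+2 - (N + 2) * X ^+ n.+1) / ((N + 1) * (N + 2))) / Mp
    = 1 / (N + 1) - M / ((N + 1) * (N + 2)) + X * Z / ((N + 1) * (N + 2)).
  by rewrite /Z /Mp !exprS; field; rewrite -/N -/M hN2 hN1 hMn hM.
have eu2 : ((M ^+ n.+1 - X ^+ n.+1) / (N + 1) -
    (M ^+ n.+2 - X ^+ n.+2 - (N + 2) * X ^+ n.+1) / ((N + 1) * (N + 2))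
    - 3 * (M ^+ n.+3 / ((N + 1) * (N + 2) * (N + 3)))) / Mp
    = 1 / (N + 1) - M / ((N + 1) * (N + 2)) + X * Z / ((N + 1) * (N + 2))
      - 3 * M ^+ 2 / ((N + 1) * (N + 2) * (N + 3)).
  by rewrite /Z /Mp !exprS; field; rewrite -/N -/M hN3 hN2 hN1 hMn hM.
have iMp : 0 <= Mp^-1 by rewrite invr_ge0 ltW.
apply: (fin_bound N1 X0 XM Z0 ZX) => /=.
  rewrite -eu2; apply: le_trans (ler_wpM2r iMp lo); rewrite ler_pM2r ?invr_gt0 //.
  by rewrite lerB // ler_wpM2l.
by rewrite -eu ler_pM2r ?invr_gt0.
Qed.

Unset Implicit Arguments.

Theorem lemma4 (R : realFieldType) :
  (forall (p m : nat) (A : {set 'I_p}) (j : 'I_p),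
     (0 < m)%N -> (1 < #|A|)%N ->
     Eunif (fun h : {ffun 'I_p -> 'I_m} => bucket_ratio R 1 A j h)
     = ((#|A| - indic (j \in A))%N%:R / (p.-1)%:R)
       * (1 - (m%:R / p%:R) * (1 - ((m.-1)%:R / m%:R) ^+ p)))
  /\
  (forall m : nat, (0 < m)%N ->
     exists C : R, exists P0 : nat, forall p : nat, (P0 <= p)%N ->
     forall (A : {set 'I_p}) (j : 'I_p), (1 < #|A|)%N ->
       exists err : R, `|err| <= C / p%:R ^+ 3 /\
       Eunif (fun h : {ffun 'I_p -> 'I_m} => bucket_ratio R 2 A j h)
       = m%:R * ((#|A| - indic (j \in A))%N%:R / (p.-1)%:R)
         * (1 / (p.-1)%:R - (m.+1)%:R / ((p.-1)%:R ^+ 2) + err)).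
Proof.
split; first by move=> p m A j; exact: part1.
move=> m m0.
exists (8 * (1 + 3 * m%:R) + (m.-1)%:R ^+ 2 + 3 * m%:R ^+ 2), 2%N.
move=> p p2 A j A1.
case: p p2 A j A1 => [|n] // p2 A j A1.
have [i0 i0j] := get_i0 j A1.
have n1 := n_ge1 i0j.
set Sg := \sum_(k < n.+1) 'C(n, k)%:R * (m.-1)%:R ^+ (n - k) * (k%:R / (k.+1)%:R ^+ 2) : R.
exists (Sg / m%:R ^+ n.+1 - 1 / n%:R + (m%:R + 1) / n%:R ^+ 2).
split; first exact: part2_core.
rewrite (Eform _ _ _ _ i0j) /= -/Sg -natr1.
have hM : m%:R != 0 :> R by rewrite pnatr_eq0 -lt0n.
have hn : n%:R != 0 :> R by rewrite pnatr_eq0 -lt0n.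
by field; rewrite hn expf_neq0.
Qed.
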